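(* Let $X_0^*$ be a $\{1,2,\dots\}$-valued random variable with $\mathbf P(X_0^*=k)\sim c_0m^{-k}k^{-\alpha}$ as $k\to\infty$, for some $0<c_0<\infty$ and $2\le\alpha\le4$. Let $\ell_0\ge1$ be the smallest integer $k\ge1$ with $\mathbf P(X_0^*=k)>0$. For integers $M>\ell_0$ let $\varrho=\varrho(M,\alpha)$ be as follows: if $\alpha=2$, $\varrho:=0$; if $2<\alpha\le4$, $\varrho$ is independent of $X_0^*$ with $\mathbf P(\varrho=0)=M^{-(\alpha-2)}=1-\mathbf P(\varrho=\ell_0)$. Set $X_0^{(M)}:=\varrho\mathbf 1_{\{X_0^*=\ell_0\}}+X_0^*\mathbf 1_{\{\ell_0<X_0^*\le M\}}$ and $p_M:=\big(1+\mathbf E\{[(m-1)X_0^{(M)}-1]m^{X_0^{(M)}}\}\big)^{-1}$. Then, as $M\to\infty$, $$p_M-p_c(X_0^* )\sim\begin{cases}\frac{c_{48}}{M^{\alpha-2}},&2<\alpha\le4,\\[2pt] \frac{1}{(m-1)c_0}\,\frac{1}{\log M},&\alpha=2,\end{cases}$$ where for $2<\alpha\le4$, $c_{48}:=[p_c(X_0^* )]^2c_{49}>0$ with $$c_{49}:=\frac{(m-1)c_0}{\alpha-2}+\{[(m-1)\ell_0-1]m^{\ell_0}+1\}\,\mathbf P(X_0^*=\ell_0).$$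
   Context: Fix an integer $m\ge2$. $p_c(X_0^* ):=\frac{1}{1+\mathbf E\{[(m-1)X_0^*-1]m^{X_0^*}\}}$, interpreted as $0$ when the expectation is infinite (so $p_c(X_0^* )=0$ when $\alpha=2$ and $p_c(X_0^* )>0$ when $\alpha>2$); it is the critical parameter of the recursive system $X_{n+1}\overset d=(X_{n,1}+\cdots+X_{n,m}-1)^+$ started from the law $(1-p)\delta_0+pP_{X_0^*}$. $a_M\sim b_M$ means $a_M/b_M\to1$. *)

(* Defs.v *)
From Stdlib Require Import Reals Lra Lia ClassicalEpsilon.
Open Scope R_scope.

Definition fm (m k : nat) : R :=
  ((INR m - 1) * INR k - 1) * INR m ^ k.

(* p_c(X_0^* ) where P is the law of X_0^* : P k = P(X_0^* = k).
   E[f(X_0^* )] is the series sum_k f(k) P k; p_c := 1/(1+E) if the series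
   converges, and 0 if the expectation is infinite. *)
Definition pc (m : nat) (P : nat -> R) : R :=
  match excluded_middle_informative
          (exists l, infinite_sum (fun k => fm m k * P k) l) with
  | left H => 1 / (1 + proj1_sig (constructive_indefinite_description _ H))
  | right _ => 0
  end.

(* Law of X_0^{(M)} := rho 1{X* = l0} + X* 1{l0 < X* <= M}, where rho is
   independent of X*, P(rho = 0) = M^{-(alpha-2)} = 1 - P(rho = l0)
   (for alpha = 2 this gives rho = 0 a.s.). *)
Definition lawXM (P : nat -> R) (l0 : nat) (alpha : R) (M k : nat) : R :=
  if Nat.eqb k 0 then
    P l0 * Rpower (INR M) (- (alpha - 2)) + (1 - sum_f_R0 P M)
  else if Nat.eqb k l0 then
    P l0 * (1 - Rpower (INR M) (- (alpha - 2)))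
  else if (Nat.ltb l0 k && Nat.leb k M)%bool then P k
  else 0.

Definition pM (m : nat) (P : nat -> R) (l0 : nat) (alpha : R) (M : nat) : R :=
  / (1 + sum_f_R0 (fun k => fm m k * lawXM P l0 alpha M k) M).

Definition asym_equiv (a b : nat -> R) : Prop :=
  Un_cv (fun n => a n / b n) 1.

(* Main.v *)
Require Import Defs.
From Stdlib Require Import Reals Lra Lia Arith ClassicalEpsilon.
From Coquelicot Require Import Coquelicot.
Open Scope R_scope.

Definition eqv (u v : nat -> R) := forall eps, 0 < eps ->
  exists N, forall k, (N <= k)%nat -> Rabs (u k - v k) <= eps * v k.
Definition negl (x v : nat -> R) := forall eps, 0 < eps ->
  exists N, forall k, (N <= k)%nat -> Rabs (x k) <= eps * v k.

Lemma eqv_nonneg u v : eqv u v -> exists N, forall k, (N <= k)%nat -> 0 <= v k.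
Proof.
  intros H. destruct (H 1 Rlt_0_1) as [N HN]. exists N. intros k Hk.
  specialize (HN k Hk). pose proof (Rabs_pos (u k - v k)). lra.
Qed.

Lemma eqv_ext u v u' v' : (exists N, forall k, (N <= k)%nat -> u k = u' k) ->
  (exists N, forall k, (N <= k)%nat -> v k = v' k) -> eqv u v -> eqv u' v'.
Proof.
  intros [N1 H1] [N2 H2] H eps He. destruct (H eps He) as [N HN].
  exists (N1 + N2 + N)%nat. intros k Hk.
  rewrite <- H1, <- H2 by lia. apply HN; lia.
Qed.

Lemma eqv_refl v : (exists N, forall k, (N <= k)%nat -> 0 <= v k) -> eqv v v.
Proof.
  intros [N HN] eps He. exists N. intros k Hk. specialize (HN k Hk).
  replace (v k - v k) with 0 by ring. rewrite Rabs_R0. nra.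
Qed.

Lemma eqv_trans u v w : eqv u v -> eqv v w -> eqv u w.
Proof.
  intros H1 H2 eps He.
  set (d := Rmin 1 (eps / 3)).
  assert (Hd : 0 < d) by (unfold d; apply Rmin_pos; lra).
  assert (Hd1 : d <= 1) by apply Rmin_l.
  assert (Hd2 : d <= eps/3) by apply Rmin_r.
  destruct (H1 d Hd) as [N1 HN1]. destruct (H2 d Hd) as [N2 HN2].
  destruct (eqv_nonneg _ _ H2) as [N3 HN3].
  exists (N1 + N2 + N3)%nat. intros k Hk.
  specialize (HN1 k ltac:(lia)). specialize (HN2 k ltac:(lia)). specialize (HN3 k ltac:(lia)).
  pose proof (Rabs_triang (u k - v k) (v k - w k)).
  replace (u k - v k + (v k - w k)) with (u k - w k) in H by ring.
  assert (v k - w k <= d * w k) by (pose proof (Rle_abs (v k - w k)); lra).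
  assert (v k <= 2 * w k) by nra.
  nra.
Qed.

Lemma eqv_sym u v : eqv u v -> eqv v u.
Proof.
  intros H eps He.
  set (d := Rmin (1/2) (eps / 2)).
  assert (Hd : 0 < d) by (unfold d; apply Rmin_pos; lra).
  assert (Hd1 : d <= 1/2) by apply Rmin_l.
  assert (Hd2 : d <= eps/2) by apply Rmin_r.
  destruct (H d Hd) as [N1 HN1]. destruct (eqv_nonneg _ _ H) as [N3 HN3].
  exists (N1 + N3)%nat. intros k Hk.
  specialize (HN1 k ltac:(lia)). specialize (HN3 k ltac:(lia)).
  rewrite Rabs_minus_sym.
  assert (v k - u k <= d * v k) by (pose proof (Rle_abs (v k - u k)); rewrite Rabs_minus_sym in HN1; lra).
  assert (v k <= 2 * u k) by nra.
  nra.
Qed.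

Lemma eqv_mulf f u v : (exists N, forall k, (N <= k)%nat -> 0 <= f k) -> eqv u v ->
  eqv (fun k => f k * u k) (fun k => f k * v k).
Proof.
  intros [N0 H0] H eps He. destruct (H eps He) as [N HN]. exists (N0 + N)%nat.
  intros k Hk. specialize (H0 k ltac:(lia)). specialize (HN k ltac:(lia)).
  replace (f k * u k - f k * v k) with (f k * (u k - v k)) by ring.
  rewrite Rabs_mult, (Rabs_pos_eq (f k)) by lra. nra.
Qed.

Lemma eqv_scal c u v : 0 <= c -> eqv u v -> eqv (fun k => c * u k) (fun k => c * v k).
Proof.
  intros Hc H. apply (eqv_mulf (fun _ => c)); auto. exists 0%nat; auto.
Qed.

Lemma eqv_plus u1 v1 u2 v2 : eqv u1 v1 -> eqv u2 v2 ->
  eqv (fun k => u1 k + u2 k) (fun k => v1 k + v2 k).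
Proof.
  intros H1 H2 eps He. destruct (H1 eps He) as [N1 HN1]. destruct (H2 eps He) as [N2 HN2].
  exists (N1 + N2)%nat. intros k Hk.
  specialize (HN1 k ltac:(lia)). specialize (HN2 k ltac:(lia)).
  pose proof (Rabs_triang (u1 k - v1 k) (u2 k - v2 k)).
  replace (u1 k - v1 k + (u2 k - v2 k)) with (u1 k + u2 k - (v1 k + v2 k)) in H by ring.
  lra.
Qed.

Lemma eqv_negl u v x : eqv u v -> negl x v -> eqv (fun k => u k + x k) v.
Proof.
  intros H1 H2 eps He. destruct (H1 (eps/2) ltac:(lra)) as [N1 HN1].
  destruct (H2 (eps/2) ltac:(lra)) as [N2 HN2].
  exists (N1 + N2)%nat. intros k Hk.
  specialize (HN1 k ltac:(lia)). specialize (HN2 k ltac:(lia)).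
  pose proof (Rabs_triang (u k - v k) (x k)).
  replace (u k - v k + x k) with (u k + x k - v k) in H by ring.
  lra.
Qed.

Lemma eqv_of_cv u v : (exists N, forall k, (N <= k)%nat -> 0 < v k) ->
  Un_cv (fun k => u k / v k) 1 -> eqv u v.
Proof.
  intros [N0 H0] H eps He. destruct (H eps He) as [N HN]. exists (N0 + N)%nat.
  intros k Hk. specialize (H0 k ltac:(lia)). specialize (HN k ltac:(lia)).
  unfold R_dist in HN.
  replace (u k - v k) with (v k * (u k / v k - 1)) by (field; lra).
  rewrite Rabs_mult, (Rabs_pos_eq (v k)) by lra. nra.
Qed.

Lemma cv_of_eqv u v : (exists N, forall k, (N <= k)%nat -> 0 < v k) ->
  eqv u v -> Un_cv (fun k => u k / v k) 1.
Proof.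
  intros [N0 H0] H eps He. destruct (H (eps/2) ltac:(lra)) as [N HN]. exists (N0 + N)%nat.
  intros k Hk. specialize (H0 k ltac:(lia)). specialize (HN k ltac:(lia)).
  unfold R_dist.
  replace (u k / v k - 1) with ((u k - v k) / v k) by (field; lra).
  unfold Rdiv. rewrite Rabs_mult, (Rabs_pos_eq (/ v k)) by (left; apply Rinv_0_lt_compat; lra).
  apply Rmult_le_compat_r with (r := / v k) in HN; [|left; apply Rinv_0_lt_compat; lra].
  replace (eps / 2 * v k * / v k) with (eps/2) in HN by (field; lra). lra.
Qed.

Lemma sum_diff_le a b N : (forall k, (N < k)%nat -> a k <= b k) ->
  forall n, (N <= n)%nat -> sum_f_R0 a n - sum_f_R0 a N <= sum_f_R0 b n - sum_f_R0 b N.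
Proof.
  intros H n Hn. induction Hn.
  - lra.
  - simpl. specialize (H (S m) ltac:(lia)). lra.
Qed.

Lemma sum_diff_abs a b N eps : (forall k, (N < k)%nat -> Rabs (a k - b k) <= eps * b k) ->
  forall n, (N <= n)%nat -> Rabs ((sum_f_R0 a n - sum_f_R0 a N) - (sum_f_R0 b n - sum_f_R0 b N))
     <= eps * (sum_f_R0 b n - sum_f_R0 b N).
Proof.
  intros H n Hn. induction Hn.
  - replace (sum_f_R0 a N - sum_f_R0 a N - (sum_f_R0 b N - sum_f_R0 b N)) with 0 by ring.
    rewrite Rabs_R0. lra.
  - simpl. specialize (H (S m) ltac:(lia)).
    pose proof (Rabs_triang (sum_f_R0 a m - sum_f_R0 a N - (sum_f_R0 b m - sum_f_R0 b N)) (a (S m) - b (S m))).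
    replace (sum_f_R0 a m - sum_f_R0 a N - (sum_f_R0 b m - sum_f_R0 b N) + (a (S m) - b (S m)))
      with (sum_f_R0 a m + a (S m) - sum_f_R0 a N - (sum_f_R0 b m + b (S m) - sum_f_R0 b N)) in H0 by ring.
    lra.
Qed.

Lemma sum_tele g n : sum_f_R0 (fun k => g (k - 1)%nat - g k) n = g 0%nat - g n.
Proof.
  induction n.
  - simpl. ring.
  - simpl. rewrite IHn. replace (n - 0)%nat with n by lia. ring.
Qed.

Lemma lim_le u v l l' : Un_cv u l -> Un_cv v l' ->
  (exists N, forall n, (N <= n)%nat -> u n <= v n) -> l <= l'.
Proof.
  intros Hu Hv [N HN]. destruct (Rle_lt_dec l l') as [|Hlt]; auto.
  destruct (Hu ((l - l')/2) ltac:(lra)) as [N1 H1].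
  destruct (Hv ((l - l')/2) ltac:(lra)) as [N2 H2].
  specialize (H1 (N + N1 + N2)%nat ltac:(lia)). specialize (H2 (N + N1 + N2)%nat ltac:(lia)).
  specialize (HN (N + N1 + N2)%nat ltac:(lia)).
  unfold R_dist in *. apply Rabs_def2 in H1. apply Rabs_def2 in H2. lra.
Qed.

Lemma nat_above x : exists N, x < INR N.
Proof.
  destruct (nfloor_ex (Rmax 0 x) (Rmax_l 0 x)) as [n Hn].
  exists (S n). rewrite S_INR. pose proof (Rmax_r 0 x). lra.
Qed.

Lemma ln_le_sub1 x : 0 < x -> ln x <= x - 1.
Proof.
  intros Hx. pose proof (exp_ineq1_le (ln x)). rewrite exp_ln in H by auto. lra.
Qed.

Lemma ln_inf : cv_infty (fun n => ln (INR n)).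
Proof.
  intros B. destruct (nat_above (exp B)) as [N HN]. exists N. intros n Hn.
  pose proof (le_INR _ _ Hn). pose proof (exp_pos B).
  rewrite <- (ln_exp B). apply ln_increasing; lra.
Qed.

Lemma rp_to0 s : 0 < s -> Un_cv (fun n => Rpower (INR n) (- s)) 0.
Proof.
  intros Hs eps He. destruct (ln_inf (- ln eps / s)) as [N HN]. exists N.
  intros n Hn. specialize (HN n Hn). unfold R_dist. rewrite Rminus_0_r.
  unfold Rpower. rewrite Rabs_pos_eq by (left; apply exp_pos).
  rewrite <- (exp_ln eps) by auto. apply exp_increasing.
  apply Rmult_lt_compat_r with (r := s) in HN; auto.
  replace (- ln eps / s * s) with (- ln eps) in HN by (field; lra). lra.
Qed.

Lemma core_est s x d E eps : 0 < s -> 0 < eps -> 1 + s + (1+s)/eps < x ->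
  1 <= d * x -> d * (x - 1) <= 1 -> 1 + s * d <= E -> E * (1 - s * d) <= 1 ->
  0 <= (E - 1) * x - s <= eps * s.
Proof.
  intros Hs He Hx Hd1 Hd2 HE1 HE2.
  assert (Hq : 0 < (1+s)/eps) by (apply Rdiv_lt_0_compat; lra).
  assert (Hx2 : eps * x > 1 + s + eps * s + eps).
  { apply Rmult_lt_compat_l with (r := eps) in Hx; auto.
    replace (eps * (1 + s + (1 + s) / eps)) with (eps + eps * s + (1+s)) in Hx by (field; lra). lra. }
  assert (Hx1 : x > 1 + s) by lra.
  assert (Hdp : 0 < d) by nra.
  assert (Hsd : s * d * (x - 1) <= s) by nra.
  assert (Hy : s * d < 1) by nra.
  split.
  - nra.
  -
    assert (H1 : (E - 1) * (1 - s * d) <= s * d) by nra.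
    assert (H2 : d * (x + (1 + eps) * s) <= 1 + eps).
    { assert (x + (1+eps) * s <= (1 + eps) * (x - 1)) by nra. nra. }
    (* (E-1) x (1 - s d) <= s d x <= s (1+eps)(1 - s d) *)
    assert (H3 : (E - 1) * x * (1 - s * d) <= s * (1 + eps) * (1 - s * d)) by nra.
    assert (H4 : (E - 1) * x <= s * (1 + eps)).
    { apply Rmult_le_reg_r with (r := 1 - s * d). lra. lra. }
    lra.
Qed.

Lemma ln_div x y : 0 < x -> 0 < y -> ln (x / y) = ln x - ln y.
Proof. intros. unfold Rdiv. rewrite ln_mult, ln_Rinv; try ring; auto. apply Rinv_0_lt_compat; auto. Qed.

Lemma ln_diff_bounds x : 1 < x -> 1 / x <= ln x - ln (x - 1) <= 1 / (x - 1).
Proof.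
  intros Hx. split.
  - pose proof (ln_le_sub1 ((x-1)/x) ltac:(apply Rdiv_lt_0_compat; lra)).
    rewrite ln_div in H by lra.
    replace ((x-1)/x - 1) with (- (1/x)) in H by (field; lra). lra.
  - pose proof (ln_le_sub1 (x/(x-1)) ltac:(apply Rdiv_lt_0_compat; lra)).
    rewrite ln_div in H by lra.
    replace (x/(x-1) - 1) with (1/(x-1)) in H by (field; lra). lra.
Qed.

Lemma exp_upper y : y < 1 -> exp y <= 1 / (1 - y).
Proof.
  intros Hy. pose proof (exp_ineq1_le (- y)).
  pose proof (exp_pos y).
  assert (exp y * exp (- y) = 1) by (rewrite <- exp_plus; replace (y + - y) with 0 by ring; apply exp_0).
  apply Rmult_le_reg_r with (r := 1 - y). lra.
  replace (1 / (1 - y) * (1 - y)) with 1 by (field; lra). nra.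
Qed.


Lemma w_q s : 0 < s -> eqv (fun k => (Rpower (INR (k-1)) (-s) - Rpower (INR k) (-s)) / s)
                          (fun k => Rpower (INR k) (-(s+1))).
Proof.
  intros Hs eps He.
  assert (Hq : 0 < (1+s)/eps) by (apply Rdiv_lt_0_compat; lra).
  destruct (nat_above (1+s+(1+s)/eps)) as [N HN]. exists N. intros k Hk.
  pose proof (le_INR _ _ Hk) as Hk'.
  set (x := INR k) in *.
  assert (Hx : 1 + s + (1+s)/eps < x) by lra.
  assert (Hk1 : (1 <= k)%nat) by (destruct k; [simpl in x; unfold x in Hx; lra | lia]).
  rewrite minus_INR by auto. fold x. simpl (INR 1).
  set (d := ln x - ln (x - 1)).
  pose proof (ln_diff_bounds x ltac:(lra)) as [Hd1 Hd2]. fold d in Hd1, Hd2.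
  set (E := exp (s * d)).
  set (G := exp (- s * ln x)).
  assert (HG : 0 < G) by apply exp_pos.
  assert (Hr1 : Rpower (x - 1) (- s) = G * E).
  { unfold Rpower, G, E. rewrite <- exp_plus. f_equal. unfold d. ring. }
  assert (Hr2 : Rpower x (- s) = G) by reflexivity.
  assert (Hr3 : Rpower x (- (s + 1)) = G / x).
  { unfold Rpower, G. replace (- (s + 1) * ln x) with (- s * ln x + - ln x) by ring.
    rewrite exp_plus, exp_Ropp, exp_ln by lra. field. lra. }
  rewrite Hr1, Hr2, Hr3.
  assert (Hdx1 : 1 <= d * x).
  { apply Rmult_le_compat_r with (r := x) in Hd1; [|lra].
    replace (1 / x * x) with 1 in Hd1 by (field; lra). lra. }
  assert (Hdx2 : d * (x - 1) <= 1).
  { apply Rmult_le_compat_r with (r := x - 1) in Hd2; [|lra].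
    replace (1 / (x - 1) * (x - 1)) with 1 in Hd2 by (field; lra). lra. }
  assert (HE1 : 1 + s * d <= E) by apply exp_ineq1_le.
  assert (HE2 : E * (1 - s * d) <= 1).
  { assert (Hsd : s * d < 1).
    { assert (d * (x - 1) * s <= s) by nra. nra. }
    pose proof (exp_upper (s * d) Hsd). fold E in H.
    apply Rmult_le_compat_r with (r := 1 - s * d) in H; [|lra].
    replace (1 / (1 - s * d) * (1 - s * d)) with 1 in H by (field; lra). lra. }
  pose proof (core_est s x d E eps Hs He Hx Hdx1 Hdx2 HE1 HE2) as [C1 C2].
  replace ((G * E - G) / s - G / x) with (G / (s * x) * ((E - 1) * x - s)) by (field; lra).
  assert (0 < G / (s * x)) by (apply Rdiv_lt_0_compat; nra).
  rewrite Rabs_mult, Rabs_pos_eq, Rabs_pos_eq by lra.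
  apply Rle_trans with (G / (s * x) * (eps * s)). apply Rmult_le_compat_l; lra.
  right. field. lra.
Qed.

Lemma h_q : eqv (fun k => ln (INR k) - ln (INR (k-1))) (fun k => Rpower (INR k) (-1)).
Proof.
  intros eps He.
  destruct (nat_above (2 + 1/eps)) as [N HN]. exists N. intros k Hk.
  assert (Hq : 0 < 1/eps) by (apply Rdiv_lt_0_compat; lra).
  pose proof (le_INR _ _ Hk) as Hk'.
  set (x := INR k) in *.
  assert (Hx : 2 + 1/eps < x) by lra.
  assert (Hk1 : (1 <= k)%nat) by (destruct k; [simpl in x; unfold x in Hx; lra | lia]).
  rewrite minus_INR by auto. fold x. simpl (INR 1).
  replace (-1) with (- (1)) by ring. rewrite Rpower_Ropp, Rpower_1 by lra.
  pose proof (ln_diff_bounds x ltac:(lra)) as [Hd1 Hd2].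
  assert (H1 : 1 / (x - 1) - 1/x <= eps * / x).
  { replace (1 / (x - 1) - 1/x) with (/x * (1/(x-1))) by (field; lra).
    rewrite (Rmult_comm eps). apply Rmult_le_compat_l. left; apply Rinv_0_lt_compat; lra.
    apply Rmult_le_reg_r with (r := x - 1). lra.
    replace (1 / (x - 1) * (x - 1)) with 1 by (field; lra).
    apply Rmult_lt_compat_l with (r := eps) in Hx; auto.
    replace (eps * (2 + 1/eps)) with (2 * eps + 1) in Hx by (field; lra). lra. }
  rewrite Rabs_pos_eq; unfold Rdiv in *; lra.
Qed.

Lemma fm0 m : fm m 0 = -1.
Proof. unfold fm. simpl. ring. Qed.

Lemma EM_id m P l0 alpha M : (1 <= l0)%nat -> (l0 <= M)%nat -> P 0%nat = 0 ->
  (forall k, (1 <= k < l0)%nat -> P k = 0) ->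
  sum_f_R0 (fun k => fm m k * lawXM P l0 alpha M k) M =
  sum_f_R0 (fun k => fm m k * P k) M
  - Rpower (INR M) (-(alpha-2)) * P l0 * (1 + fm m l0) - (1 - sum_f_R0 P M).
Proof.
  intros Hl0 HlM HP0 HPl.
  set (r := Rpower (INR M) (-(alpha-2))).
  set (t := 1 - sum_f_R0 P M).
  assert (Hgen : forall n, (n <= M)%nat ->
     sum_f_R0 (fun k => fm m k * lawXM P l0 alpha M k) n =
     sum_f_R0 (fun k => fm m k * P k) n - (P l0 * r + t)
     - (if Nat.leb l0 n then r * fm m l0 * P l0 else 0)).
  { induction n; intros Hn.
    - simpl. unfold lawXM. simpl. rewrite fm0, HP0.
      destruct l0; [lia|]. simpl. fold r t. ring.
    - simpl sum_f_R0. rewrite IHn by lia.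
      unfold lawXM at 1. replace (Nat.eqb (S n) 0) with false by reflexivity.
      destruct (Nat.eqb (S n) l0) eqn:E1.
      + apply Nat.eqb_eq in E1. subst l0.
        replace (Nat.leb (S n) n) with false by (symmetry; apply Nat.leb_gt; lia).
        replace (Nat.leb (S n) (S n)) with true by (symmetry; apply Nat.leb_le; lia).
        fold r. ring.
      + apply Nat.eqb_neq in E1.
        destruct (Nat.ltb l0 (S n)) eqn:E2.
        * apply Nat.ltb_lt in E2.
          replace (Nat.leb (S n) M) with true by (symmetry; apply Nat.leb_le; lia).
          replace (Nat.leb l0 n) with true by (symmetry; apply Nat.leb_le; lia).
          replace (Nat.leb l0 (S n)) with true by (symmetry; apply Nat.leb_le; lia).
          simpl. ring.
        * apply Nat.ltb_ge in E2.
          replace (Nat.leb l0 n) with false by (symmetry; apply Nat.leb_gt; lia).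
          replace (Nat.leb l0 (S n)) with false by (symmetry; apply Nat.leb_gt; lia).
          rewrite (HPl (S n)) by lia. simpl. ring. }
  rewrite Hgen by lia.
  replace (Nat.leb l0 M) with true by (symmetry; apply Nat.leb_le; lia).
  fold r t. ring.
Qed.

Lemma INR_m2 m : (2 <= m)%nat -> 2 <= INR m.
Proof. intros. apply le_INR in H. simpl in H. lra. Qed.

Lemma fm_ge m k : (2 <= m)%nat -> (1 <= k)%nat -> INR k - 1 <= fm m k.
Proof.
  intros Hm Hk. unfold fm. pose proof (INR_m2 m Hm).
  apply le_INR in Hk. simpl in Hk.
  assert (1 <= INR m ^ k) by (apply pow_R1_Rle; lra).
  assert (INR k - 1 <= (INR m - 1) * INR k - 1) by nra.
  nra.
Qed.

Lemma fm_nonneg m k : (2 <= m)%nat -> (1 <= k)%nat -> 0 <= fm m k.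
Proof.
  intros Hm Hk. pose proof (fm_ge m k Hm Hk). apply le_INR in Hk. simpl in Hk. lra.
Qed.

Lemma a_eqv m P c0 alpha : (2 <= m)%nat -> 0 < c0 ->
  asym_equiv P (fun k => c0 * / (INR m ^ k) * Rpower (INR k) (- alpha)) ->
  eqv (fun k => fm m k * P k) (fun k => (INR m - 1) * c0 * Rpower (INR k) (1 - alpha)).
Proof.
  intros Hm Hc0 Hasym. pose proof (INR_m2 m Hm) as Hm2.
  assert (Hmk : forall k, 0 < INR m ^ k) by (intros; apply pow_lt; lra).
  assert (HP : eqv P (fun k => c0 * / (INR m ^ k) * Rpower (INR k) (- alpha))).
  { apply eqv_of_cv; auto. exists 0%nat. intros k _.
    apply Rmult_lt_0_compat; [apply Rmult_lt_0_compat; auto; apply Rinv_0_lt_compat; auto|apply exp_pos]. }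
  apply (eqv_mulf (fm m)) in HP; [|exists 1%nat; intros; apply fm_nonneg; auto].
  eapply eqv_trans; [exact HP|].
  set (L := (INR m - 1) * c0).
  assert (HL : 0 < L) by (unfold L; nra).
  set (q := fun k => L * Rpower (INR k) (1 - alpha)).
  assert (Hneg : negl (fun k => - c0 * Rpower (INR k) (- alpha)) q).
  { intros eps He. destruct (nat_above (c0 / (eps * L))) as [N HN]. exists (S N).
    intros k Hk. apply le_INR in Hk. rewrite S_INR in Hk.
    assert (Hk0 : 0 < INR k) by (pose proof (pos_INR N); lra).
    unfold q. replace (1 - alpha) with (1 + - alpha) by ring.
    rewrite Rpower_plus, Rpower_1 by auto.
    assert (HR : 0 < Rpower (INR k) (- alpha)) by apply exp_pos.
    rewrite Rabs_left1 by nra.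
    assert (c0 <= eps * L * INR k).
    { assert (c0 / (eps * L) * (eps * L) = c0) by (field; lra).
      assert (0 < eps * L) by nra. nra. }
    nra. }
  pose proof (eqv_negl q q _ (eqv_refl q ltac:(exists 0%nat; intros; unfold q; left; apply Rmult_lt_0_compat; auto; apply exp_pos)) Hneg) as H.
  eapply eqv_ext; [| exists 0%nat; reflexivity | exact H].
  exists 1%nat. intros k Hk. unfold q, L, fm.
  apply le_INR in Hk. simpl in Hk.
  replace (1 - alpha) with (1 + - alpha) by ring.
  rewrite Rpower_plus, Rpower_1 by lra.
  field. apply Rgt_not_eq, Hmk.
Qed.

Lemma Un_cv_ext_loc u v l : (exists N, forall n, (N <= n)%nat -> u n = v n) ->
  Un_cv u l -> Un_cv v l.
Proof.
  intros [N HN] H eps He. destruct (H eps He) as [N1 H1]. exists (N + N1)%nat.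
  intros n Hn. rewrite <- HN by lia. apply H1. lia.
Qed.

Lemma lim_abs_le u v l l' : Un_cv u l -> Un_cv v l' ->
  (exists N, forall n, (N <= n)%nat -> Rabs (u n) <= v n) -> Rabs l <= l'.
Proof.
  intros Hu Hv [N HN]. apply Rabs_le. split.
  - assert (- l' <= l); [|lra].
    apply (lim_le (fun n => - v n) u). apply CV_opp; auto. auto.
    exists N. intros n Hn. specialize (HN n Hn). pose proof (Rle_abs (- u n)); rewrite Rabs_Ropp in H; lra.
  - apply (lim_le u v); auto. exists N. intros n Hn. specialize (HN n Hn).
    pose proof (Rle_abs (u n)). lra.
Qed.

Lemma negl_mono x v v' : negl x v -> (exists N, forall k, (N <= k)%nat -> v k <= v' k) ->
  negl x v'.
Proof.
  intros H [N0 H0] eps He. destruct (H eps He) as [N HN]. exists (N0 + N)%nat.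
  intros k Hk. specialize (H0 k ltac:(lia)). specialize (HN k ltac:(lia)). nra.
Qed.

Lemma pc_val m P E0 : infinite_sum (fun k => fm m k * P k) E0 -> pc m P = 1 / (1 + E0).
Proof.
  intros HE. unfold pc. destruct (excluded_middle_informative _) as [H|H].
  - destruct (constructive_indefinite_description _ H) as [l Hl]. simpl.
    rewrite (uniqueness_sum _ _ _ Hl HE). reflexivity.
  - exfalso. apply H. eauto.
Qed.

Lemma pc_zero m P : ~ (exists l, infinite_sum (fun k => fm m k * P k) l) -> pc m P = 0.
Proof.
  intros Hn. unfold pc. destruct (excluded_middle_informative _) as [H|H]; tauto.
Qed.

Lemma sum_growing a : (forall k, 0 <= a k) -> Un_growing (sum_f_R0 a).
Proof. intros H n. simpl. specialize (H (S n)). lra. Qed.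

Lemma sum_le_lim a l M : (forall k, 0 <= a k) -> Un_cv (sum_f_R0 a) l -> sum_f_R0 a M <= l.
Proof. intros H Hl. apply (growing_ineq _ l (sum_growing a H) Hl). Qed.

Lemma sum_scal c f n : sum_f_R0 (fun k => c * f k) n = c * sum_f_R0 f n.
Proof. induction n; simpl; [|rewrite IHn]; ring. Qed.

Lemma CV_const c : Un_cv (fun _ => c) c.
Proof. intros eps He. exists 0%nat. intros. unfold R_dist. rewrite Rminus_diag_eq, Rabs_R0; auto. Qed.

Lemma case_gt (m : nat) (P : nat -> R) (c0 alpha : R) (l0 : nat) :
  (2 <= m)%nat ->
  (forall k, 0 <= P k) -> P 0%nat = 0 -> infinite_sum P 1 ->
  0 < c0 -> 2 < alpha ->
  asym_equiv P (fun k => c0 * / (INR m ^ k) * Rpower (INR k) (- alpha)) ->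
  (1 <= l0)%nat -> 0 < P l0 -> (forall k, (1 <= k < l0)%nat -> P k = 0) ->
     let c49 := (INR m - 1) * c0 / (alpha - 2)
                + (((INR m - 1) * INR l0 - 1) * INR m ^ l0 + 1) * P l0 in
     let c48 := (pc m P) ^ 2 * c49 in
     asym_equiv (fun M => pM m P l0 alpha M - pc m P)
                (fun M => c48 / Rpower (INR M) (alpha - 2)).
Proof.
  intros Hm HP HP0 HP1 Hc0 Hal Hasym Hl0 HPl0 HPl c49 c48.
  set (s := alpha - 2). assert (Hs : 0 < s) by (unfold s; lra).
  set (L := (INR m - 1) * c0).
  pose proof (INR_m2 m Hm) as Hm2.
  assert (HL : 0 < L) by (unfold L; nra).
  set (K := L / s). assert (HK : 0 < K) by (unfold K; apply Rdiv_lt_0_compat; auto).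
  set (a := fun k => fm m k * P k).
  assert (Ha : forall k, 0 <= a k).
  { intros [|k]; unfold a. rewrite HP0; lra. apply Rmult_le_pos; auto. apply fm_nonneg; auto; lia. }
  set (g := fun k => Rpower (INR k) (- s)).
  assert (Hg : forall k, 0 < g k) by (intros; apply exp_pos).
  assert (Hg0 : Un_cv g 0) by (apply rp_to0; auto).
  assert (Haw : eqv a (fun k => K * g (k - 1)%nat - K * g k)).
  { pose proof (a_eqv m P c0 alpha Hm Hc0 Hasym) as H1. fold L in H1.
    pose proof (eqv_scal L _ _ (Rlt_le _ _ HL) (eqv_sym _ _ (w_q s Hs))) as H2.
    eapply eqv_trans; [exact H1|].
    eapply eqv_ext; [| | exact H2].
    - exists 0%nat. intros k _. f_equal. f_equal. unfold s. ring.
    - exists 0%nat. intros k _. unfold K, g. field. lra. }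
  set (b := fun k => K * g (k - 1)%nat - K * g k).
  assert (Hsb : forall n, sum_f_R0 b n = K * g 0%nat - K * g n).
  { intros n. apply (sum_tele (fun j => K * g j)). }
  destruct (growing_cv (sum_f_R0 a) (sum_growing a Ha)) as [E0 HE0].
  { destruct (Haw 1 Rlt_0_1) as [N1 HN1].
    exists (sum_f_R0 a N1 + 2 * (K * g N1)). intros y [n ->].
    destruct (le_lt_dec N1 n) as [Hn|Hn].
    - pose proof (sum_diff_le a (fun k => 2 * b k) N1) as H.
      assert (Hb : forall k, (N1 < k)%nat -> a k <= 2 * b k).
      { intros k Hk. specialize (HN1 k ltac:(lia)). fold b in HN1.
        pose proof (Rle_abs (a k - b k)). unfold b in *. lra. }
      specialize (H Hb n Hn).
      rewrite !sum_scal, !Hsb in H.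
      pose proof (Hg n). nra.
    - pose proof (tech9 _ (sum_growing a Ha) n N1 ltac:(lia)).
      pose proof (Hg N1). nra. }
  assert (HpcE : pc m P = 1 / (1 + E0)) by (apply pc_val; exact HE0).
  assert (HE0pos : 0 <= E0).
  { pose proof (sum_le_lim a E0 0 Ha HE0). pose proof (Ha 0%nat). simpl in H. lra. }
  set (T := fun M => E0 - sum_f_R0 a M).
  assert (HT : eqv T (fun M => K * g M)).
  { intros eps He. destruct (Haw eps He) as [N HN]. exists N. intros M HM.
    pose proof (sum_diff_abs a b M eps) as H.
    assert (Hb : forall k, (M < k)%nat -> Rabs (a k - b k) <= eps * b k).
    { intros k Hk. apply HN. lia. }
    specialize (H Hb).
    apply (lim_abs_le (fun n => sum_f_R0 a n - sum_f_R0 a M - ((K * g 0%nat - K * g n) - (K * g 0%nat - K * g M)))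
                      (fun n => eps * ((K * g 0%nat - K * g n) - (K * g 0%nat - K * g M)))).
    - unfold T. replace (E0 - sum_f_R0 a M - K * g M) with
        (E0 - sum_f_R0 a M - ((K * g 0%nat - K * 0) - (K * g 0%nat - K * g M))) by ring.
      apply CV_minus. apply CV_minus; auto. apply (CV_const (sum_f_R0 a M)).
      apply CV_minus; [|apply CV_const].
      apply CV_minus. apply CV_const. apply CV_mult. apply CV_const. auto.
    - replace (eps * (K * g M)) with (eps * ((K * g 0%nat - K * 0) - (K * g 0%nat - K * g M))) by ring.
      apply CV_mult. apply CV_const. apply CV_minus; [|apply CV_const].
      apply CV_minus. apply CV_const. apply CV_mult. apply CV_const. auto.
    - exists M. intros n Hn. specialize (H n Hn). rewrite !Hsb in H. exact H. }
  set (t := fun M => 1 - sum_f_R0 P M).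
  assert (Ht0 : forall M, 0 <= t M).
  { intros M. unfold t. pose proof (sum_le_lim P 1 M HP HP1). lra. }
  assert (HtCV : Un_cv t 0).
  { replace 0 with (1 - 1) by ring. apply CV_minus. apply CV_const. exact HP1. }
  assert (HtT : forall M, (1 <= M)%nat -> INR M * t M <= T M).
  { intros M HM. unfold t, T.
    apply (lim_le (fun n => INR M * (sum_f_R0 P n - sum_f_R0 P M)) (fun n => sum_f_R0 a n - sum_f_R0 a M)).
    - apply CV_mult. apply CV_const. apply CV_minus. exact HP1. apply CV_const.
    - apply CV_minus. auto. apply CV_const.
    - exists M. intros n Hn.
      pose proof (sum_diff_le (fun k => INR M * P k) a M) as H.
      rewrite Rmult_minus_distr_l, <- !sum_scal. apply H; auto.
      intros k Hk. unfold a. pose proof (fm_ge m k Hm ltac:(lia)).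
      assert (Hk' : (S M <= k)%nat) by lia. apply le_INR in Hk'. rewrite S_INR in Hk'. pose proof (HP k). nra. }
  assert (Htn : negl t (fun M => K * g M)).
  { intros eps He. destruct (HT 1 Rlt_0_1) as [N1 HN1].
    destruct (nat_above (2 / eps)) as [N2 HN2]. exists (1 + N1 + N2)%nat.
    intros M HM. specialize (HN1 M ltac:(lia)).
    assert (HTM : T M <= 2 * (K * g M)) by (pose proof (Rle_abs (T M - K * g M)); lra).
    pose proof (HtT M ltac:(lia)).
    assert (HM2 : 2 / eps <= INR M) by (apply le_INR in HM; rewrite !plus_INR in HM; pose proof (pos_INR N1); simpl in HM; lra).
    assert (HKg : 0 < K * g M) by (apply Rmult_lt_0_compat; auto).
    rewrite Rabs_pos_eq by auto.
    assert (2 <= eps * INR M).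
    { apply Rmult_le_compat_l with (r := eps) in HM2; [|lra].
      replace (eps * (2 / eps)) with 2 in HM2 by (field; lra). lra. }
    pose proof (Ht0 M). nra. }
  set (C1 := P l0 * (1 + fm m l0)).
  assert (HC1 : 0 < C1).
  { unfold C1. pose proof (fm_nonneg m l0 Hm Hl0). apply Rmult_lt_0_compat; lra. }
  set (EM := fun M => sum_f_R0 (fun k => fm m k * lawXM P l0 alpha M k) M).
  assert (HEM : forall M, (l0 <= M)%nat -> EM M = sum_f_R0 a M - g M * C1 - t M).
  { intros M HM. unfold EM. rewrite EM_id by auto. unfold t, g, s, a, C1. ring. }
  set (D := fun M => E0 - EM M).
  assert (HD : eqv D (fun M => c49 * g M)).
  { assert (H1 : eqv (fun M => T M + C1 * g M) (fun M => K * g M + C1 * g M)).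
    { apply eqv_plus; auto. apply eqv_refl. exists 0%nat. intros. pose proof (Hg k). nra. }
    assert (H2 : negl t (fun M => K * g M + C1 * g M)).
    { apply (negl_mono _ _ _ Htn). exists 0%nat. intros. pose proof (Hg k). nra. }
    pose proof (eqv_negl _ _ _ H1 H2) as H3.
    eapply eqv_ext; [| | exact H3].
    - exists l0. intros M HM. unfold D. rewrite HEM by auto. unfold T. ring.
    - exists 0%nat. intros M _. unfold c49, K, C1, L, fm, s. ring. }
  assert (Hc49 : 0 < c49).
  { assert (c49 = K + C1) by (unfold c49, K, C1, L, fm, s; ring). lra. }
  assert (HEMcv : Un_cv EM E0).
  { apply (Un_cv_ext_loc (fun M => sum_f_R0 a M - g M * C1 - t M)).
    exists l0. intros M HM. symmetry. apply HEM; auto.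
    replace E0 with (E0 - 0 * C1 - 0) by ring.
    apply CV_minus; auto. apply CV_minus; auto. apply CV_mult; auto. apply CV_const. }
  assert (HDcv : Un_cv (fun M => D M / (c49 * g M)) 1).
  { apply cv_of_eqv; auto. exists 0%nat. intros. apply Rmult_lt_0_compat; auto. }
  assert (Hrat : Un_cv (fun M => (1 + E0) / (1 + EM M)) 1).
  { assert (H1 : is_lim_seq (fun M => 1 + EM M) (1 + E0)).
    { apply is_lim_seq_Reals.
      apply CV_plus. apply CV_const. auto. }
    pose proof (is_lim_seq_div' (fun _ => 1 + E0) (fun M => 1 + EM M) (1 + E0) (1 + E0)
       (is_lim_seq_const _) H1 ltac:(lra)) as H2.
    apply is_lim_seq_Reals in H2. replace ((1 + E0) / (1 + E0)) with 1 in H2 by (field; lra).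
    exact H2. }
  pose proof (CV_mult _ _ _ _ HDcv Hrat) as Hfin. rewrite Rmult_1_l in Hfin.
  unfold asym_equiv. eapply Un_cv_ext_loc; [|exact Hfin].
  destruct (HEMcv 1 Rlt_0_1) as [N1 HN1].
  exists (l0 + N1)%nat. intros M HM. specialize (HN1 M ltac:(lia)).
  unfold R_dist in HN1. apply Rabs_def2 in HN1.
  assert (HEMp : 0 < 1 + EM M) by lra.
  unfold pM. fold (EM M). unfold c48, D. rewrite HpcE.
  assert (HgM : g M = / Rpower (INR M) (alpha - 2)) by (unfold g, s; apply Rpower_Ropp).
  rewrite HgM.
  assert (HR : 0 < Rpower (INR M) (alpha - 2)) by apply exp_pos.
  unfold s in *. set (Rp := Rpower (INR M) (alpha - 2)) in *.
  set (x := EM M) in *. clearbody c49 Rp x.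
  field. repeat split; lra.
Qed.

Lemma stolz a b : eqv a b -> cv_infty (sum_f_R0 b) -> eqv (sum_f_R0 a) (sum_f_R0 b).
Proof.
  intros H Hinf eps He. destruct (H (eps/2) ltac:(lra)) as [N HN].
  set (C := Rabs (sum_f_R0 a N - sum_f_R0 b N)).
  destruct (Hinf (Rabs (sum_f_R0 b N) + 2 * C / eps)) as [N2 HN2].
  exists (N + N2)%nat. intros n Hn.
  pose proof (sum_diff_abs a b N (eps/2) ltac:(intros; apply HN; lia) n ltac:(lia)) as H1.
  specialize (HN2 n ltac:(lia)).
  pose proof (Rabs_triang (sum_f_R0 a n - sum_f_R0 a N - (sum_f_R0 b n - sum_f_R0 b N))
                          (sum_f_R0 a N - sum_f_R0 b N)) as H2.
  replace (sum_f_R0 a n - sum_f_R0 a N - (sum_f_R0 b n - sum_f_R0 b N) + (sum_f_R0 a N - sum_f_R0 b N))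
    with (sum_f_R0 a n - sum_f_R0 b n) in H2 by ring.
  fold C in H2.
  pose proof (Rle_abs (sum_f_R0 b N)) as H3. pose proof (Rle_abs (- sum_f_R0 b N)) as H4. rewrite Rabs_Ropp in H4.
  assert (H5 : 2 * C / eps * eps = 2 * C) by (field; lra).
  assert (H6 : eps * (Rabs (sum_f_R0 b N) + 2 * C / eps) < eps * sum_f_R0 b n) by (apply Rmult_lt_compat_l; lra).
  nra.
Qed.

Lemma ln0 : ln (INR 0) = 0.
Proof. simpl INR. unfold ln. destruct (Rlt_dec 0 0) as [H|H]; [exfalso; exact (Rlt_irrefl 0 H)|reflexivity]. Qed.

Lemma sum_h n : sum_f_R0 (fun k => ln (INR k) - ln (INR (k - 1))) n = ln (INR n).
Proof.
  induction n.
  - change (ln (INR 0) - ln (INR 0) = ln (INR 0)). rewrite ln0. ring.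
  - rewrite tech5, IHn. replace (S n - 1)%nat with n by lia. ring.
Qed.

Lemma case_eq2 (m : nat) (P : nat -> R) (c0 alpha : R) (l0 : nat) :
  (2 <= m)%nat ->
  (forall k, 0 <= P k) -> P 0%nat = 0 -> infinite_sum P 1 ->
  0 < c0 -> alpha = 2 ->
  asym_equiv P (fun k => c0 * / (INR m ^ k) * Rpower (INR k) (- alpha)) ->
  (1 <= l0)%nat -> 0 < P l0 -> (forall k, (1 <= k < l0)%nat -> P k = 0) ->
     asym_equiv (fun M => pM m P l0 alpha M - pc m P)
                (fun M => 1 / ((INR m - 1) * c0) * / ln (INR M)).
Proof.
  intros Hm HP HP0 HP1 Hc0 Hal Hasym Hl0 HPl0 HPl.
  set (L := (INR m - 1) * c0).
  pose proof (INR_m2 m Hm) as Hm2.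
  assert (HL : 0 < L) by (unfold L; nra).
  set (a := fun k => fm m k * P k).
  assert (Ha : forall k, 0 <= a k).
  { intros [|k]; unfold a. rewrite HP0; lra. apply Rmult_le_pos; auto. apply fm_nonneg; auto; lia. }
  set (h := fun k => ln (INR k) - ln (INR (k - 1))).
  assert (Haw : eqv a (fun k => L * h k)).
  { pose proof (a_eqv m P c0 alpha Hm Hc0 Hasym) as H1. fold L in H1.
    pose proof (eqv_scal L _ _ (Rlt_le _ _ HL) (eqv_sym _ _ h_q)) as H2.
    eapply eqv_trans; [exact H1|].
    eapply eqv_ext; [| | exact H2].
    - exists 0%nat. intros k _. f_equal. f_equal. subst alpha. ring.
    - exists 0%nat. reflexivity. }
  assert (HsumLh : forall n, sum_f_R0 (fun k => L * h k) n = L * ln (INR n)).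
  { intros n. rewrite sum_scal. unfold h. rewrite sum_h. reflexivity. }
  assert (Hlninf : cv_infty (fun n => L * ln (INR n))).
  { intros B. destruct (ln_inf (B / L)) as [N HN]. exists N. intros n Hn. specialize (HN n Hn).
    apply Rmult_lt_compat_l with (r := L) in HN; auto.
    replace (L * (B / L)) with B in HN by (field; lra). lra. }
  assert (HS : eqv (sum_f_R0 a) (fun n => L * ln (INR n))).
  { pose proof (stolz _ _ Haw) as H.
    eapply eqv_ext; [exists 0%nat; reflexivity | exists 0%nat; intros; apply HsumLh |].
    apply H. intros B. destruct (Hlninf B) as [N HN]. exists N. intros. rewrite HsumLh. auto. }
  assert (Hlnpos : forall n, (2 <= n)%nat -> 0 < ln (INR n)).
  { intros n Hn. rewrite <- ln_1. apply ln_increasing. lra. apply le_INR in Hn. simpl in Hn. lra. }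
  assert (HSr : Un_cv (fun n => sum_f_R0 a n / (L * ln (INR n))) 1).
  { apply cv_of_eqv; [exists 2%nat; intros k Hk; apply Rmult_lt_0_compat; auto | exact HS]. }
  assert (Hinv0 : Un_cv (fun n => / ln (INR n)) 0) by (apply cv_infty_cv_0; apply ln_inf).
  assert (Hpc : pc m P = 0).
  { apply pc_zero. intros [l Hl].
    assert (Un_cv (fun n => sum_f_R0 a n / (L * ln (INR n))) 0).
    { replace 0 with (l * (/ L * 0)) by ring.
      eapply Un_cv_ext_loc; [| apply CV_mult; [exact Hl | apply CV_mult; [apply CV_const | exact Hinv0]]].
      exists 2%nat. intros n Hn. pose proof (Hlnpos n Hn). unfold a, Rdiv. rewrite Rinv_mult. ring. }
    pose proof (UL_sequence _ _ _ HSr H). lra. }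
  set (t := fun M => 1 - sum_f_R0 P M).
  assert (HtCV : Un_cv t 0).
  { replace 0 with (1 - 1) by ring. apply CV_minus. apply CV_const. exact HP1. }
  set (C1 := P l0 * (1 + fm m l0)).
  set (EM := fun M => sum_f_R0 (fun k => fm m k * lawXM P l0 alpha M k) M).
  assert (HEM : forall M, (l0 <= M)%nat -> EM M = sum_f_R0 a M - C1 - t M).
  { intros M HM. unfold EM. rewrite EM_id by auto.
    replace (Rpower (INR M) (- (alpha - 2))) with 1.
    unfold t, a, C1. ring.
    unfold Rpower. replace (- (alpha - 2) * ln (INR M)) with 0 by (subst; ring). symmetry; apply exp_0. }
  set (Q := fun M => (1 + EM M) / (L * ln (INR M))).
  assert (HQ : Un_cv Q 1).
  { eapply Un_cv_ext_loc with (u := fun M => sum_f_R0 a M / (L * ln (INR M)) + (1 - C1 - t M) * (/ ln (INR M) * / L)).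
    - exists (2 + l0)%nat. intros M HM. unfold Q. rewrite HEM by lia.
      pose proof (Hlnpos M ltac:(lia)). unfold Rdiv. rewrite Rinv_mult. ring.
    - assert (Hc : Un_cv (fun M => (1 - C1 - t M) * (/ ln (INR M) * / L)) 0).
      { replace 0 with ((1 - C1 - 0) * (0 * / L)) by ring.
        apply CV_mult. apply CV_minus; auto. apply CV_const.
        apply CV_mult; auto. apply CV_const. }
      pose proof (CV_plus _ _ _ _ HSr Hc) as H. rewrite Rplus_0_r in H. exact H. }
  assert (HQi : Un_cv (fun M => / Q M) 1).
  { apply is_lim_seq_Reals in HQ. pose proof (is_lim_seq_inv _ _ HQ) as H.
    apply is_lim_seq_Reals. replace (Finite 1) with (Rbar_inv (Finite 1)).
    apply H. intros E; injection E; lra. simpl. f_equal. apply Rinv_1. }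
  unfold asym_equiv. eapply Un_cv_ext_loc; [|exact HQi].
  destruct (HQ (1/2) ltac:(lra)) as [N1 HN1].
  exists (2 + N1)%nat. intros M HM. specialize (HN1 M ltac:(lia)).
  unfold R_dist in HN1. apply Rabs_def2 in HN1.
  pose proof (Hlnpos M ltac:(lia)) as Hln.
  unfold Q in *. fold (EM M). rewrite Hpc. unfold pM. fold (EM M).
  assert (HEMp : 0 < 1 + EM M).
  { assert (0 < (1 + EM M) / (L * ln (INR M))) by lra.
    assert (0 < L * ln (INR M)) by (apply Rmult_lt_0_compat; auto).
    apply Rmult_lt_compat_r with (r := L * ln (INR M)) in H; auto.
    replace ((1 + EM M) / (L * ln (INR M)) * (L * ln (INR M))) with (1 + EM M) in H by (field; lra). lra. }
  set (x := EM M) in *. set (y := ln (INR M)) in *. clearbody x y L.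
  field. repeat split; lra.
Qed.

Theorem lemma8p3 (m : nat) (P : nat -> R) (c0 alpha : R) (l0 : nat) :
  (2 <= m)%nat ->
  (* P is the law of a {1,2,...}-valued random variable X_0^* *)
  (forall k, 0 <= P k) -> P 0%nat = 0 -> infinite_sum P 1 ->
  (* P(X_0^* = k) ~ c0 m^{-k} k^{-alpha} *)
  0 < c0 -> 2 <= alpha <= 4 ->
  asym_equiv P (fun k => c0 * / (INR m ^ k) * Rpower (INR k) (- alpha)) ->
  (* l0 = smallest k >= 1 with P(X_0^* = k) > 0 *)
  (1 <= l0)%nat -> 0 < P l0 -> (forall k, (1 <= k < l0)%nat -> P k = 0) ->
  (2 < alpha ->
     let c49 := (INR m - 1) * c0 / (alpha - 2)
                + (((INR m - 1) * INR l0 - 1) * INR m ^ l0 + 1) * P l0 in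
     let c48 := (pc m P) ^ 2 * c49 in
     asym_equiv (fun M => pM m P l0 alpha M - pc m P)
                (fun M => c48 / Rpower (INR M) (alpha - 2)))
  /\
  (alpha = 2 ->
     asym_equiv (fun M => pM m P l0 alpha M - pc m P)
                (fun M => 1 / ((INR m - 1) * c0) * / ln (INR M))).
Proof.
  intros Hm HP HP0 HP1 Hc0 Hal Hasym Hl0 HPl0 HPl. split.
  - intros Hgt. exact (case_gt m P c0 alpha l0 Hm HP HP0 HP1 Hc0 Hgt Hasym Hl0 HPl0 HPl).
  - intros Heq. exact (case_eq2 m P c0 alpha l0 Hm HP HP0 HP1 Hc0 Heq Hasym Hl0 HPl0 HPl).
Qed.
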